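(* Let $n$ and $r$ be positive integers with $n\geq (r^2+r)/2$. Then $b(\mathrm{S}_{n,r})=\left\lceil\frac{2n-2}{r+1}\right\rceil$.
   Context: $\mathrm{S}_{n,r}$ denotes the symmetric group $\mathrm{S}_n$ acting naturally on the set of $r$-element subsets of $[n]=\{1,\dots,n\}$. For a permutation group $G$ on a set $\Omega$, $b(G)$ is the minimum size of a subset of $\Omega$ whose pointwise stabiliser in $G$ is trivial. *)

(* Defs.v *)
From mathcomp Require Import all_boot all_fingroup.
Set Implicit Arguments. Unset Strict Implicit. Unset Printing Implicit Defensive.
Local Open Scope group_scope.

(* The symmetric group S_n = {perm 'I_n} acting on subsets of [n] = 'I_n
   via the natural set action 'P^* (A |-> p @: A).  S_{n,r} is this action
   restricted to r-element subsets. *)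

Definition is_base_Snr (n r : nat) (B : {set {set 'I_n}}) : Prop :=
  (forall A, A \in B -> #|A| = r) /\
  'C(B | ('P^*)%act) = 1%g.

(* Main.v *)
Require Import Defs.
From mathcomp Require Import all_boot all_fingroup.
From mathcomp Require Import zify.
From Stdlib Require Import Lia.
Set Implicit Arguments. Unset Strict Implicit. Unset Printing Implicit Defensive.


Lemma sum_boolE (T : finType) (A : {pred T}) (P : pred T) :
  \sum_(x in A) (P x : nat) = #|[set x in A | P x]|.
Proof.
rewrite -sum1_card [LHS]big_mkcond [RHS]big_mkcond /=.
apply: eq_bigr => x _; rewrite inE; by case: (x \in A); case: (P x).
Qed.

Lemma sum_memE (T : finType) (X : {set T}) :
  \sum_x (x \in X : nat) = #|X|.
Proof.
rewrite (sum_boolE predT (fun x => x \in X)); apply: eq_card => x.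
by rewrite !inE.
Qed.

Lemma ltn_sum_strict (I : finType) (f g : I -> nat) j :
  (forall i, f i <= g i) -> f j < g j -> \sum_i f i < \sum_i g i.
Proof.
move=> le lt; rewrite (bigD1 j) //= [X in _ < X](bigD1 j) //=.
by rewrite -addSn leq_add // leq_sum.
Qed.

Lemma double_count (T : finType) (S : {set {set T}}) :
  \sum_w \sum_(X in S) (w \in X : nat) = \sum_(X in S) #|X|.
Proof.
rewrite exchange_big /=; apply: eq_bigr => X _; exact: sum_memE.
Qed.

Lemma move_ex (T : finType) (S : {set T}) (P Q : pred T) (h : T -> T) :
  {in P &, injective h} -> (forall X, P X -> Q (h X)) ->
  #|[set X in S | Q X]| < #|[set X in S | P X]| ->
  exists2 X, X \in S & P X && (h X \notin S).
Proof.
move=> hinj hPQ hlt.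
case: (boolP [exists X, [&& X \in S, P X & h X \notin S]]).
  by case/existsP => X /and3P [H1 H2 H3]; exists X => //; rewrite H2 H3.
rewrite negb_exists => /forallP Hall.
have sub : h @: [set X in S | P X] \subset [set X in S | Q X].
  apply/subsetP => Y /imsetP [X]; rewrite inE => /andP [XS PX] ->.
  have := Hall X; rewrite XS PX /= negbK => hS.
  by rewrite inE hS hPQ.
have := subset_leq_card sub; rewrite card_in_imset; last first.
  by move=> x y; rewrite !inE => /andP [_ Px] /andP [_ Py]; apply: hinj.
by rewrite leqNgt hlt.
Qed.

Lemma update_sum (T : finType) (S : {set T}) X0 Y (f : T -> nat) :
  X0 \in S -> Y \notin S ->
  \sum_(X in Y |: (S :\ X0)) f X + f X0 = \sum_(X in S) f X + f Y.
Proof.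
move=> XS YS.
rewrite big_setU1 /=; last by rewrite inE negb_and YS orbT.
rewrite [in RHS](bigD1 X0) //=.
have -> : \sum_(X in S :\ X0) f X = \sum_(X in S | X != X0) f X.
  by apply: eq_bigl => X; rewrite !inE andbC.
lia.
Qed.

Lemma update_card (T : finType) (S : {set T}) X0 Y :
  X0 \in S -> Y \notin S -> #|Y |: (S :\ X0)| = #|S|.
Proof.
move=> XS YS; rewrite cardsU1 (cardsD1 X0 S) XS inE negb_and YS orbT.
by [].
Qed.

Definition cnt (k : nat) (S : {set {set 'I_k}}) (w : 'I_k) : nat :=
  \sum_(X in S) (w \in X : nat).

Definition Phi (k r : nat) (S : {set {set 'I_k}}) : nat :=
  \sum_w ((cnt S w - r) + (r - cnt S w)).

Lemma sum_const_ord (k r : nat) : \sum_(w < k) r = k * r.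
Proof. by rewrite sum_nat_const card_ord. Qed.

Lemma step (k n r : nat) (S : {set {set 'I_k}}) :
  #|S| = n -> 2 * r <= n.+1 -> \sum_w cnt S w <= k * r ->
  (exists w, cnt S w != r) ->
  exists S' : {set {set 'I_k}},
    [/\ #|S'| = n, \sum_w cnt S' w <= k * r & Phi r S' < Phi r S].
Proof.
move=> cS hn hsum [v hw0].
case: (boolP [exists v, r < cnt S v]).
  clear hw0; case/existsP => {}v hv.
  have [u hu] : exists u, cnt S u < r.
    case: (boolP [exists u, cnt S u < r]) => [/existsP //|].
    rewrite negb_exists => /forallP hall; exfalso.
    have : \sum_(w < k) r < \sum_w cnt S w.
      apply: (@ltn_sum_strict _ (fun _ => r) _ v) => // i.
      by have := hall i; rewrite -leqNgt.
    by rewrite sum_const_ord ltnNge hsum.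
  have uv : u != v by apply/eqP => e; subst; lia.
  pose P := fun X : {set 'I_k} => (v \in X) && (u \notin X).
  pose Q := fun X : {set 'I_k} => (u \in X) && (v \notin X).
  pose h := fun X : {set 'I_k} => u |: (X :\ v).
  have hinj0 : forall X Y, P X -> P Y -> h X = h Y -> X = Y.
    move=> X Y; rewrite /P /h => /andP[vX uX] /andP[vY uY] e.
    apply/setP => z.
    have := congr1 (fun A : {set 'I_k} => z \in A) e; rewrite /= !inE.
    case: (eqVneq z u) => [->|zu]; first by rewrite (negbTE uX) (negbTE uY).
    case: (eqVneq z v) => [->|zv]; first by rewrite vX vY.
    by [].
  have hinj : {in P &, injective h} := fun X Y hX hY => hinj0 X Y hX hY.
  have hPQ : forall X, P X -> Q (h X).
    move=> X; rewrite /P /Q /h !inE eqxx /= eq_sym (negbTE uv) /=.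
    by rewrite eqxx.
  have hlt : #|[set X in S | Q X]| < #|[set X in S | P X]|.
    have e1 : cnt S v = #|[set X in S | P X]| +
                        #|[set X in S | (v \in X) && (u \in X)]|.
      rewrite -!sum_boolE -big_split; apply: eq_bigr => X _; rewrite /P.
      by case: (v \in X); case: (u \in X).
    have e2 : cnt S u = #|[set X in S | Q X]| +
                        #|[set X in S | (v \in X) && (u \in X)]|.
      rewrite -!sum_boolE -big_split; apply: eq_bigr => X _; rewrite /Q.
      by case: (v \in X); case: (u \in X).
    lia.
  case: (move_ex hinj hPQ hlt) => X0 X0S /andP [PX0 hX0S].
  move: PX0; rewrite /P => /andP [vX0 uX0].
  have upd : forall w, cnt (h X0 |: (S :\ X0)) w + (w \in X0)
                       = cnt S w + (w \in h X0).
    move=> w; have := update_sum (fun X : {set 'I_k} => (w \in X) : nat) X0S hX0S.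
    by [].
  exists (h X0 |: (S :\ X0)); split.
  - by rewrite update_card.
  - have e : \sum_w (cnt (h X0 |: (S :\ X0)) w + (w \in X0))
           = \sum_w (cnt S w + (w \in h X0)) by apply: eq_bigr => w _.
    move: e; rewrite !big_split /= !sum_memE.
    have -> : #|h X0| = #|X0|.
      rewrite /h cardsU1 (cardsD1 v X0) vX0 !inE negb_and negbK uX0 /=.
      by rewrite orbT.
    by move=> /eqP; rewrite eqn_add2r => /eqP ->.
  - apply: (ltn_sum_strict _ (j := v)).
      move=> w; have := upd w; rewrite /h !inE.
      case: (eqVneq w v) => [->|wv].
        rewrite vX0 eq_sym (negbTE uv) /=; lia.
      case: (eqVneq w u) => [->|wu].
        rewrite (negbTE uX0) /=; lia.
      rewrite /=; lia.
    have := upd v; rewrite /h !inE vX0 eq_sym (negbTE uv) eqxx /=; lia.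
rewrite negb_exists => /forallP hle.
have hle' : forall w, cnt S w <= r by move=> w; have := hle w; rewrite -leqNgt.
have hv : cnt S v < r by rewrite ltn_neqAle hw0 hle'.

pose P := fun X : {set 'I_k} => v \notin X.
pose Q := fun X : {set 'I_k} => v \in X.
pose h := fun X : {set 'I_k} => v |: X.
have hinj0 : forall X Y, P X -> P Y -> h X = h Y -> X = Y.
  move=> X Y; rewrite /P /h => vX vY e.
  apply/setP => z.
  have := congr1 (fun A : {set 'I_k} => z \in A) e; rewrite /= !inE.
  case: (eqVneq z v) => [->|zv]; first by rewrite (negbTE vX) (negbTE vY).
  by [].
have hinj : {in P &, injective h} := fun X Y hX hY => hinj0 X Y hX hY.
have hPQ : forall X, P X -> Q (h X) by move=> X _; rewrite /Q /h !inE eqxx.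
have hlt : #|[set X in S | Q X]| < #|[set X in S | P X]|.
  have e1 : cnt S v = #|[set X in S | Q X]| by rewrite -sum_boolE.
  have e2 : #|[set X in S | P X]| + #|[set X in S | Q X]| = n.
    rewrite -!sum_boolE -big_split -cS -sum1_card; apply: eq_bigr => X _.
    by rewrite /P /Q; case: (v \in X).
  lia.
case: (move_ex hinj hPQ hlt) => X0 X0S /andP [PX0 hX0S].
have upd : forall w, cnt (h X0 |: (S :\ X0)) w + (w \in X0)
                     = cnt S w + (w \in h X0).
  move=> w; have := update_sum (fun X : {set 'I_k} => (w \in X) : nat) X0S hX0S.
  by [].
have upd' : forall w, cnt (h X0 |: (S :\ X0)) w = cnt S w + (w == v).
  move=> w; have := upd w; rewrite /h !inE.
  case: (eqVneq w v) => [->|wv]; first by rewrite (negbTE PX0) /=; lia.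
  by rewrite /= addn0 => /eqP; rewrite eqn_add2r => /eqP.
exists (h X0 |: (S :\ X0)); split.
- by rewrite update_card.
- rewrite -sum_const_ord; apply: leq_sum => w _; rewrite upd'.
  case: (eqVneq w v) => [->|wv] /=; first by lia.
  by rewrite addn0 hle'.
- apply: (ltn_sum_strict _ (j := v)).
    move=> w; rewrite upd'; case: (eqVneq w v) => [->|wv] /=; lia.
  rewrite upd' eqxx /=; lia.
Qed.

Lemma balance (k n r : nat) (S : {set {set 'I_k}}) :
  #|S| = n -> 2 * r <= n.+1 -> \sum_w cnt S w <= k * r ->
  exists S' : {set {set 'I_k}}, #|S'| = n /\ forall w, cnt S' w = r.
Proof.
move=> cS hn.
move: {2}(Phi r S) (leqnn (Phi r S)) => m.
elim: m S cS => [|m IH] S cS hPhi hsum.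
  exists S; split => // w; apply/eqP; apply/negPn/negP => hw.
  have : 0 < Phi r S.
    rewrite /Phi (bigD1 w) //=; move: hw; lia.
  by rewrite lt0n -leqn0 hPhi.
case: (boolP [exists w, cnt S w != r]).
  case/existsP => w hw.
  case: (step cS hn hsum (ex_intro _ w hw)) => S' [cS' hs' hP'].
  apply: (IH S') => //; lia.
rewrite negb_exists => /forallP hall.
by exists S; split => // w; have := hall w; rewrite negbK => /eqP.
Qed.

Lemma sum_boolT (T : finType) (P : pred T) :
  \sum_x (P x : nat) = #|[set x | P x]|.
Proof.
rewrite -sum1_card [LHS]big_mkcond [RHS]big_mkcond /=.
by apply: eq_bigr => x _; rewrite inE; case: (P x).
Qed.

Lemma tperm_fix (n : nat) (x y : 'I_n) (A : {set 'I_n}) :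
  (x \in A) = (y \in A) -> [set aperm z (tperm x y) | z in A] = A.
Proof.
move=> hxy; apply/eqP; rewrite eqEcard; apply/andP; split.
  apply/subsetP => z' /imsetP [z zA ->]; rewrite /aperm.
  case: tpermP => [e|e|_ _] //; subst.
    by rewrite -hxy.
  by rewrite hxy.
rewrite card_imset //; exact: perm_inj.
Qed.

Lemma lower_raw (n r : nat) (B : {set {set 'I_n}}) :
  is_base_Snr r B -> 2 * n <= #|B| * r + #|B| + 2.
Proof.
case=> hsz hC.
pose sig := fun x : 'I_n => [set A in B | x \in A].
have sinj : injective sig.
  move=> x y e; apply/eqP/negPn/negP => xy.
  have hp : tperm x y \in 'C(B | ('P^*)%act)%g.
    apply/astabP => A AB /=.
    apply: tperm_fix.
    have := congr1 (fun s : {set {set 'I_n}} => A \in s) e; rewrite /sig /= !inE AB.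
    by [].
  move: hp; rewrite hC inE => /eqP p1.
  have := congr1 (fun q : {perm 'I_n} => q x) p1; rewrite /= perm1 tpermL => /eqP.
  by rewrite eq_sym (negbTE xy).
have hsum : \sum_(A in B) #|A| = #|B| * r.
  rewrite -sum_nat_const; apply: eq_bigr => A AB; exact: hsz.
have hsig : \sum_x #|sig x| = #|B| * r.
  rewrite -hsum -double_count; apply: eq_bigr => x _.
  by rewrite sum_boolE.
have h0 : #|[set x | sig x == set0]| <= 1.
  rewrite -(card_imset _ sinj) -(cards1 (@set0 {set 'I_n})).
  apply: subset_leq_card; apply/subsetP => s /imsetP [x]; rewrite !inE.
  by move=> /eqP -> ->.
have h1 : #|[set x | #|sig x| == 1]| <= #|B|.
  rewrite -(card_imset _ sinj).
  apply: (leq_trans _ (leq_imset_card (fun A => [set A]) B)).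
  apply: subset_leq_card; apply/subsetP => s /imsetP [x]; rewrite !inE.
  case/cards1P => A hA ->; rewrite hA.
  apply: imset_f.
  have : A \in sig x by rewrite hA set11.
  by rewrite /sig inE => /andP [].
have hpt : forall x, 2 <= #|sig x| + 2 * (sig x == set0) + (#|sig x| == 1).
  move=> x; case: (posnP #|sig x|) => [/cards0_eq ->|].
    by rewrite eqxx cards0.
  case: (eqVneq #|sig x| 1) => [->|ne]; first by case: (sig x == set0).
  move=> pos; have : 1 < #|sig x| by rewrite ltn_neqAle eq_sym ne pos.
  by case: (sig x == set0); case: (#|sig x| == 1); lia.
have : \sum_(x < n) 2 <= \sum_x (#|sig x| + 2 * (sig x == set0) + (#|sig x| == 1)).
  by apply: leq_sum => x _; apply: hpt.
rewrite !big_split /= hsig !sum_boolT sum_nat_const card_ord big1 //.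
set a := #|[set x | sig x == set0]| in h0 *. set c := #|[set x | #|sig x| == 1]| in h1 *. move: (#|B| * r) => t. clearbody a c. move: h1. move: #|B| => b. lia.
Qed.

Lemma lower (n r : nat) (B : {set {set 'I_n}}) :
  is_base_Snr r B -> (2 * n - 2 + r) %/ (r + 1) <= #|B|.
Proof.
move=> /lower_raw h.
rewrite -ltnS ltn_divLR; last by rewrite addn1.
nia.
Qed.

Lemma base_of_S (n k r : nat) (S : {set {set 'I_k}}) :
  #|S| = n -> (forall w, cnt S w = r) ->
  exists B : {set {set 'I_n}}, is_base_Snr r B /\ #|B| <= k.
Proof.
move=> cS hc.
pose e := fun x : 'I_n => enum_val (cast_ord (esym cS) x).
have einj : injective e.
  by move=> x y /enum_val_inj /cast_ord_inj.
have eS : forall x, e x \in S by move=> x; exact: enum_valP.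
have esurj : forall X, X \in S -> exists x, e x = X.
  move=> X XS; exists (cast_ord cS (enum_rank_in XS X)).
  by rewrite /e cast_ordK enum_rankK_in.
pose F := fun v : 'I_k => [set x | v \in e x].
have cF : forall v, #|F v| = r.
  move=> v; rewrite -(card_imset _ einj) -(hc v) /cnt sum_boolE.
  apply: eq_card => X; rewrite inE.
  apply/imsetP/andP.
    by case=> x; rewrite inE => vx ->; split => //; exact: eS.
  case=> XS vX; case: (esurj X XS) => x ex; exists x => //.
  by rewrite inE ex.
exists [set F v | v : 'I_k]; split; last first.
  by apply: (leq_trans (leq_imset_card _ _)); rewrite card_ord.
split.
  by move=> A /imsetP [v _ ->].
apply/eqP; rewrite eqEsubset sub1G andbT; apply/subsetP => p hp.
have hF : forall v, [set aperm z p | z in F v] = F v.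
  move=> v; have := astabP hp (F v) (imset_f F (isT : v \in 'I_k)).
  by [].
rewrite inE; apply/eqP/permP => x; rewrite perm1.
apply: einj; apply/setP => v.
have h1 : (p x \in F v) = (x \in F v).
  have inj : injective (fun z => aperm z p) by move=> a b; exact: perm_inj.
  have := mem_imset (F v) x inj; rewrite hF.
  by [].
by move: h1; rewrite !inE.
Qed.

Lemma init_S (k n r : nat) : 0 < n ->
  k <= n - 1 -> (n - 1 - k) * 2 <= k * (k - 1) ->
  k + 2 * (n - 1 - k) <= k * r ->
  exists S : {set {set 'I_k}}, #|S| = n /\ \sum_w cnt S w <= k * r.
Proof.
move=> hn hk hC hS.
set m := n - 1 - k.
pose F1 := [set [set v] | v : 'I_k].
pose F2 := [set X : {set 'I_k} | #|X| == 2].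
pose P := [set X in take m (enum F2)].
have cF2 : #|F2| = 'C(k, 2) by rewrite card_draws card_ord.
have hm : m <= #|F2|.
  have := bin_ffact k 2; rewrite ffactnS ffactn1 -cF2 /= -subn1 => e.
  move: e hC; rewrite /m; move: #|F2| => f. have -> : 2`! = 2 by []. nia.

have cP : #|P| = m.
  rewrite cardsE.
  have /card_uniqP -> : uniq (take m (enum F2)) by rewrite take_uniq ?enum_uniq.
  by rewrite size_takel // -cardE.
have PF2 : forall X, X \in P -> #|X| = 2.
  move=> X; rewrite inE => /mem_take; rewrite mem_enum inE => /eqP.
  by [].
have dis : [disjoint F1 & P].
  apply/pred0P => X /=; apply/negP => /andP [/imsetP [v _ ->] /PF2]; by rewrite cards1.
have s0 : set0 \notin F1 :|: P.
  rewrite inE negb_or; apply/andP; split.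
    apply/imsetP => [[v _ e]]; have := set11 v; by rewrite -e inE.
  by apply/negP => /PF2; rewrite cards0.
have cF1 : #|F1| = k by rewrite card_imset ?card_ord //; exact: set1_inj.
exists (set0 |: (F1 :|: P)); split.
  rewrite cardsU1 s0 /=.
  have /eqP -> : #|F1 :|: P| == #|F1| + #|P| by rewrite (leq_card_setU F1 P).2.
  rewrite cF1 cP /m; lia.
rewrite /cnt double_count big_setU1 //= cards0 add0n.
rewrite (eq_bigl [predU F1 & P]); last by move=> X; rewrite !inE.
rewrite bigU //.
have -> : \sum_(X in F1) #|X| = \sum_(X in F1) 1.
  by apply: eq_bigr => X /imsetP [v _ ->]; rewrite cards1.
have -> : \sum_(X in P) #|X| = \sum_(X in P) 2.
  by apply: eq_bigr => X /PF2.
rewrite sum1_card sum_nat_const cF1 cP /=.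
move: hS; rewrite -/m.
by rewrite (mulnC m 2).
Qed.
Unset Implicit Arguments.

Theorem corollary3p3 (n r : nat) :
  0 < n -> 0 < r -> r * (r + 1) <= 2 * n ->
  let k := (2 * n - 2 + r) %/ (r + 1) in
  (exists B : {set {set 'I_n}}, is_base_Snr r B /\ #|B| = k) /\
  (forall B : {set {set 'I_n}}, is_base_Snr r B -> k <= #|B|).
Proof.
move=> hn hr hrn k.
have low : forall B : {set {set 'I_n}}, is_base_Snr r B -> k <= #|B|.
  by move=> B; exact: lower.
split => //.
have hdiv := divn_eq (2 * n - 2 + r) (r + 1).
have hmod : (2 * n - 2 + r) %% (r + 1) < r + 1 by rewrite ltn_pmod // addn1.
rewrite -/k in hdiv.
move: hdiv hmod; move: ((2 * n - 2 + r) %% (r + 1)) => t hdiv hmod.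
have hA : k <= n - 1 by nia.
have hlo : 2 * n - 2 <= k * (r + 1) by lia.
have hB : (n - 1 - k) * 2 <= k * (k - 1).
  case: (leqP r k) => hrk; first nia.
  have : k * (r + 1) <= (r - 1) * (r + 1) by apply: leq_mul => //; lia.
  nia.
have hC : k + 2 * (n - 1 - k) <= k * r by nia.
have hD : 2 * r <= n.+1.
  case: (leqP r 2) => hr2; first nia.
  nia.
have [S0 [cS0 sS0]] := init_S hn hA hB hC.
have [S [cS hS]] := balance cS0 hD sS0.
have [B [hB1 hB2]] := base_of_S cS hS.
exists B; split => //.
by apply/eqP; rewrite eqn_leq hB2 low.
Qed.
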